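(* Let $m\ge1$, $\overline{n}\ge 1$, and for $i=1,\dots,m$ let $D^{(i)}\in\mathbb{R}^{\ell_i\times\overline{n}}$ and $V^{(i)}\in\mathbb{R}^{\ell_i}$, where the $D^{(i)}$ are scaled so that $\max_i\|(D^{(i)})^TD^{(i)}\|_2\le 1$ (spectral norm). For $C\in\mathbb{R}^{\overline{n}\times m}$ with columns $c^{(1)},\dots,c^{(m)}$ define $D\star C=[D^{(1)}c^{(1)},\dots,D^{(m)}c^{(m)}]$, $\|D\star C-V\|_2^2=\sum_{i=1}^m\|D^{(i)}c^{(i)}-V^{(i)}\|_2^2$, and, for $W=[w^{(1)},\dots,w^{(m)}]$ with $w^{(i)}\in\mathbb{R}^{\ell_i}$, $D^T\star W$ the $\overline{n}\times m$ matrix with columns $(D^{(i)})^Tw^{(i)}$. Let $\gamma>0$ and $$F(C)=\|D\star C-V\|_2^2+\gamma\|C\|_{2,0},$$ where $\|C\|_{2,0}$ is the number of nonzero rows of $C$. Given $C^0\in\mathbb{R}^{\overline{n}\times m}$, generate a sequence by $$S^{k+1}=\operatorname{supp}\Big(H_{\sqrt{\gamma}}\big(C^k+D^T\star(V-D\star C^k)\big)\Big),\qquad C^{k+1}\in\operatorname*{argmin}_{C:\ \operatorname{supp}(C)\subset S^{k+1}}\|D\star C-V\|_2^2,$$ where $H_a$ acts row-wise on a matrix, setting a row $x$ to $0$ if $\|x\|_2\le a$ and leaving it unchanged otherwise, and $\operatorname{supp}(C)$ is the set of indices of nonzero rows of $C$. Then $F(C^{k+1})\le F(C^k)$ for all $k$,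 and there are subsequences of $(C^k)$ that converge to local minimizers of $F$. In addition, if $D$ is coercive (there exists $\delta>0$ with $\|D\star C\|_2\ge\delta\|C\|_2$ for all $C$), then the sequence $(C^k)$ converges to a local minimizer of $F$.
   Context: This is the group hard-iterative thresholding scheme for the group-sparse regression problem $\min_C \sum_{i=1}^m\|D^{(i)}c^{(i)}-V^{(i)}\|_2^2+\gamma\|C\|_{2,0}$, in which the $m$ columns of $C$ (one per data source) are required to share a common row support. Norms $\|C\|_2$ of matrices are Frobenius norms. *)

(* Defs.v *)
From HB Require Import structures.
From mathcomp Require Import all_boot all_order all_algebra.
From mathcomp Require Import all_classical all_reals all_analysis.
Set Implicit Arguments. Unset Strict Implicit. Unset Printing Implicit Defensive.
Import Order.TTheory GRing.Theory Num.Theory.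
Import numFieldNormedType.Exports.
Local Open Scope ring_scope.

Section GroupIHT.
Variable R : realType.

Definition sqnorm (p q : nat) (A : 'M[R]_(p, q)) : R :=
  \sum_(i < p) \sum_(j < q) A i j ^+ 2.
Definition norm2 (p q : nat) (A : 'M[R]_(p, q)) : R := Num.sqrt (sqnorm A).

(* spectral norm bound ||A||_2 <= c, written out as the operator-norm bound *)
Definition spec_norm_le (p : nat) (A : 'M[R]_p) (c : R) : Prop :=
  forall x : 'cV[R]_p, norm2 (A *m x) <= c * norm2 x.

Variables (m n : nat) (ell : 'I_m -> nat).
Variable D : forall i : 'I_m, 'M[R]_(ell i, n).
Variable V : forall i : 'I_m, 'cV[R]_(ell i).

Definition Dstar (C : 'M[R]_(n, m)) : forall i : 'I_m, 'cV[R]_(ell i) :=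
  fun i => D i *m col i C.

Definition DTstar (W : forall i : 'I_m, 'cV[R]_(ell i)) : 'M[R]_(n, m) :=
  \matrix_(j < n, i < m) ((D i)^T *m W i) j 0.

Definition resid (C : 'M[R]_(n, m)) : R :=
  \sum_(i < m) sqnorm (Dstar C i - V i).

Definition Dstar_norm (C : 'M[R]_(n, m)) : R :=
  Num.sqrt (\sum_(i < m) sqnorm (Dstar C i)).

Definition supp (C : 'M[R]_(n, m)) : {set 'I_n} := [set j | row j C != 0].

Definition norm20 (C : 'M[R]_(n, m)) : nat := #|supp C|.

Definition Fobj (gamma : R) (C : 'M[R]_(n, m)) : R :=
  resid C + gamma * (norm20 C)%:R.

Definition Hthr (a : R) (X : 'M[R]_(n, m)) : 'M[R]_(n, m) :=
  \matrix_(j < n, i < m) (if norm2 (row j X) <= a then 0 else X j i).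

Definition iht_step (gamma : R) (C C' : 'M[R]_(n, m)) : Prop :=
  let S := supp (Hthr (Num.sqrt gamma)
                   (C + DTstar (fun i => V i - Dstar C i))) in
  supp C' \subset S /\
  (forall C'' : 'M[R]_(n, m), supp C'' \subset S -> resid C' <= resid C'').

Definition local_min (gamma : R) (L : 'M[R]_(n, m)) : Prop :=
  \forall C \near L, Fobj gamma L <= Fobj gamma C.

Definition coercive : Prop :=
  exists2 delta : R, 0 < delta &
    forall C : 'M[R]_(n, m), delta * norm2 C <= Dstar_norm C.

End GroupIHT.

(* Main.v *)
Require Import Defs.
From HB Require Import structures.
From mathcomp Require Import all_boot all_order all_algebra.
From mathcomp Require Import all_classical all_reals all_analysis.
From mathcomp Require Import ring lra zify.
Import Order.TTheory GRing.Theory Num.Theory.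
Import numFieldNormedType.Exports.
Local Open Scope classical_set_scope.
Local Open Scope ring_scope.
Set Implicit Arguments. Unset Strict Implicit. Unset Printing Implicit Defensive.
Section Aux.
Variable R : realType.

Definition dot p (u w : 'cV[R]_p) : R := \sum_(k < p) u k ord0 * w k ord0.

Lemma sqnorm_cV p (u : 'cV[R]_p) : sqnorm u = dot u u.
Proof. by rewrite /sqnorm /dot; apply: eq_bigr => k _; rewrite big_ord1 expr2. Qed.

Lemma dotC p (u w : 'cV[R]_p) : dot u w = dot w u.
Proof. by apply: eq_bigr => k _; rewrite mulrC. Qed.

Lemma dotDl p (u v w : 'cV[R]_p) : dot (u + v) w = dot u w + dot v w.
Proof. by rewrite /dot -big_split; apply: eq_bigr => k _; rewrite mxE mulrDl. Qed.

Lemma dotNl p (u w : 'cV[R]_p) : dot (- u) w = - dot u w.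
Proof. by rewrite /dot -sumrN; apply: eq_bigr => k _; rewrite mxE mulNr. Qed.

Lemma dotZl p a (u w : 'cV[R]_p) : dot (a *: u) w = a * dot u w.
Proof. by rewrite /dot mulr_sumr; apply: eq_bigr => k _; rewrite mxE mulrA. Qed.

Lemma dotDr p (u v w : 'cV[R]_p) : dot w (u + v) = dot w u + dot w v.
Proof. by rewrite dotC dotDl !(dotC w). Qed.

Lemma dotNr p (u w : 'cV[R]_p) : dot w (- u) = - dot w u.
Proof. by rewrite dotC dotNl dotC. Qed.

Lemma dot_mul p q (A : 'M[R]_(p, q)) u w : dot (A *m u) w = dot u (A^T *m w).
Proof.
rewrite /dot.
under eq_bigr do rewrite mxE big_distrl.
rewrite exchange_big /=; apply: eq_bigr => l _.
rewrite mxE big_distrr /=; apply: eq_bigr => k _.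
by rewrite mxE; ring.
Qed.

Lemma sqnormD p (u w : 'cV[R]_p) :
  sqnorm (u + w) = sqnorm u + 2 * dot u w + sqnorm w.
Proof. by rewrite !sqnorm_cV dotDl !dotDr (dotC w u); ring. Qed.

Lemma sqnorm_ge0 p q (A : 'M[R]_(p, q)) : 0 <= sqnorm A.
Proof. by apply: sumr_ge0 => i _; apply: sumr_ge0 => j _; apply: sqr_ge0. Qed.

Lemma sqnorm_eq0 p q (A : 'M[R]_(p, q)) : sqnorm A = 0 -> A = 0.
Proof.
move=> H; apply/matrixP => i j; rewrite mxE.
have H1 := psumr_eq0P (fun i _ => sumr_ge0 _ (fun j _ => sqr_ge0 (A i j))) H.
have := psumr_eq0P (fun j _ => sqr_ge0 (A i j)) (H1 i isT) (isT : true).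
by move=> /(_ j) /eqP; rewrite sqrf_eq0 => /eqP.
Qed.

Lemma sqnormN p q (A : 'M[R]_(p, q)) : sqnorm (- A) = sqnorm A.
Proof. by apply: eq_bigr => i _; apply: eq_bigr => j _; rewrite mxE sqrrN. Qed.

Lemma spec_bound p q (Dm : 'M[R]_(p, q)) :
  spec_norm_le (Dm^T *m Dm) 1 -> forall y : 'cV[R]_q, sqnorm (Dm *m y) <= sqnorm y.
Proof.
move=> H y.
have h1 : sqnorm (Dm^T *m Dm *m y) <= sqnorm y.
  have := H y; rewrite mul1r /norm2 ler_sqrt //; exact: sqnorm_ge0.
have h2 := sqnorm_ge0 (y - (Dm^T *m Dm *m y)).
rewrite sqnormD sqnormN dotNr in h2.
rewrite sqnorm_cV dot_mul mulmxA.
lra.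
Qed.

Lemma surrogate_col p q (Dm : 'M[R]_(p, q)) (e : 'cV[R]_q) (w : 'cV[R]_p) :
  spec_norm_le (Dm^T *m Dm) 1 ->
  sqnorm (Dm *m e + w) <= sqnorm w + sqnorm (e + Dm^T *m w) - sqnorm (Dm^T *m w).
Proof.
move=> H; have := spec_bound H e.
rewrite !sqnormD dot_mul; lra.
Qed.

End Aux.
Section Main.
Variable R : realType.
Variables (m n : nat) (ell : 'I_m -> nat).
Variable D : forall i : 'I_m, 'M[R]_(ell i, n).
Variable V : forall i : 'I_m, 'cV[R]_(ell i).
Hypothesis Hspec : forall i : 'I_m, spec_norm_le ((D i)^T *m D i) 1.

Lemma colD' p q (i : 'I_q) (X Y : 'M[R]_(p, q)) : col i (X + Y) = col i X + col i Y.
Proof. by apply/colP => r; rewrite !mxE. Qed.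
Lemma colN' p q (i : 'I_q) (X : 'M[R]_(p, q)) : col i (- X) = - col i X.
Proof. by apply/colP => r; rewrite !mxE. Qed.
Lemma colB' p q (i : 'I_q) (X Y : 'M[R]_(p, q)) : col i (X - Y) = col i X - col i Y.
Proof. by rewrite colD' colN'. Qed.
Lemma colZ' p q (i : 'I_q) a (X : 'M[R]_(p, q)) : col i (a *: X) = a *: col i X.
Proof. by apply/colP => r; rewrite !mxE. Qed.

Lemma col_DTstar W i : col i (DTstar D W) = (D i)^T *m W i.
Proof. by apply/colP => r; rewrite !mxE. Qed.

Lemma sqnorm_cols (X : 'M[R]_(n, m)) : sqnorm X = \sum_i sqnorm (col i X).
Proof.
rewrite /sqnorm exchange_big /=; apply: eq_bigr => i _; apply: eq_bigr => j _.
by rewrite big_ord1 !mxE.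
Qed.

Lemma sqnorm_rows (X : 'M[R]_(n, m)) : sqnorm X = \sum_j sqnorm (row j X).
Proof.
rewrite /sqnorm; apply: eq_bigr => j _; rewrite big_ord1.
by apply: eq_bigr => i _; rewrite !mxE.
Qed.

Definition Bmat (A : 'M[R]_(n, m)) := A + DTstar D (fun i => V i - Dstar D A i).

Lemma surrogate (A X : 'M[R]_(n, m)) :
  resid D V X <= resid D V A + sqnorm (X - Bmat A) - sqnorm (A - Bmat A).
Proof.
rewrite /resid (sqnorm_cols (X - _)) (sqnorm_cols (A - _)) -addrA -sumrB -big_split /=.
apply: ler_sum => i _.
set e := col i X - col i A.
set w := Dstar D A i - V i.
have E1 : Dstar D X i - V i = D i *m e + w.
  by rewrite /w /e /Dstar mulmxBr addrA subrK.
have E2 : col i (X - Bmat A) = e + (D i)^T *m w.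
  rewrite /Bmat colB' colD' col_DTstar /e /w -(opprB (Dstar D A i)) mulmxN.
  by rewrite opprD opprK addrA.
have E3 : col i (A - Bmat A) = (D i)^T *m w.
  rewrite /Bmat colB' colD' col_DTstar /w -(opprB (Dstar D A i)) mulmxN.
  by rewrite opprD opprK addrA subrr add0r.
rewrite E1 E2 E3.
have := surrogate_col e w (Hspec i); lra.
Qed.

End Main.
Section Thr.
Variable R : realType.

Lemma sqnorm0 p q : sqnorm (0 : 'M[R]_(p, q)) = 0.
Proof. by apply: big1 => i _; apply: big1 => j _; rewrite mxE expr0n. Qed.

Definition rcost q (g : R) (b y : 'rV[R]_q) := sqnorm (y - b) + g * (y != 0)%:R.

Lemma row_opt q (g : R) (b y : 'rV[R]_q) : 0 < g ->
  let t := if norm2 b <= Num.sqrt g then 0 else b in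
  rcost g b t <= rcost g b y /\
  (rcost g b t = rcost g b y -> y != t -> t = 0 /\ y != 0).
Proof.
move=> g0 t; rewrite /t /norm2 ler_sqrt ?(ltW g0) //.
have hy := sqnorm_ge0 (y - b).
case: ifP => hb.
  rewrite /rcost eqxx /= mulr0 addr0 sub0r sqnormN.
  case: (eqVneq y 0) => [->|ny0].
    by rewrite sub0r sqnormN /= mulr0 addr0; split.
  by rewrite /= mulr1; split => [|_ _]; [lra|].
have nb0 : b != 0.
  by apply/eqP => b0; move: hb; rewrite b0 sqnorm0 (ltW g0).
rewrite /rcost subrr sqnorm0 nb0 add0r mulr1.
case: (eqVneq y 0) => [->|ny0].
  rewrite sub0r sqnormN /= mulr0 addr0; move/negbT: hb; rewrite -ltNge => hb.
  by split => [|E]; [lra | move=> _; exfalso; lra].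
rewrite /= mulr1; split => [|E]; first lra.
have : sqnorm (y - b) = 0 by lra.
move/sqnorm_eq0/eqP; by rewrite subr_eq0 => /eqP ->; rewrite eqxx.
Qed.

Variables (n m : nat).

Definition tcost (g : R) (B X : 'M[R]_(n, m)) := sqnorm (X - B) + g * (norm20 X)%:R.

Lemma rowB' p q (j : 'I_p) (X Y : 'M[R]_(p, q)) : row j (X - Y) = row j X - row j Y.
Proof. by apply/rowP => r; rewrite !mxE. Qed.

Lemma norm20E (X : 'M[R]_(n, m)) : (norm20 X)%:R = \sum_j ((row j X != 0)%:R : R).
Proof.
rewrite /norm20 -sum1_card natr_sum big_mkcond /=; apply: eq_bigr => j _.
by rewrite /supp inE; case: ifP.
Qed.

Lemma tcostE g (B X : 'M[R]_(n, m)) : tcost g B X = \sum_j rcost g (row j B) (row j X).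
Proof.
rewrite /tcost norm20E sqnorm_rows mulr_sumr -big_split /=.
by apply: eq_bigr => j _; rewrite rowB'.
Qed.

Lemma row_Hthr a (X : 'M[R]_(n, m)) j :
  row j (Hthr a X) = if norm2 (row j X) <= a then 0 else row j X.
Proof. by apply/rowP => r; rewrite !mxE; case: ifP => _; rewrite ?mxE. Qed.

Lemma thr_opt (g : R) (B X : 'M[R]_(n, m)) : 0 < g ->
  let T := Hthr (Num.sqrt g) B in
  tcost g B T <= tcost g B X /\
  (tcost g B T = tcost g B X ->
     forall j, row j X != row j T -> row j T = 0 /\ row j X != 0).
Proof.
move=> g0 T; rewrite !tcostE.
have H j := row_opt (row j B) (row j X) g0.
have Hle : forall j, rcost g (row j B) (row j T) <= rcost g (row j B) (row j X).
  by move=> j; rewrite /T row_Hthr; case: (H j).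
split; first by apply: ler_sum => j _; apply: Hle.
move=> E j; rewrite /T row_Hthr; apply: (proj2 (H j)).
have E2 : \sum_j (rcost g (row j B) (row j X) - rcost g (row j B) (row j T)) = 0.
  by rewrite sumrB E subrr.
have := @psumr_eq0P _ _ predT _ (fun j _ => (introT idP (etrans (subr_ge0 _ _) (Hle j)))) E2 j isT.
by move/eqP; rewrite subr_eq0 => /eqP ->; rewrite /T row_Hthr.
Qed.

End Thr.
Section Step.
Variable R : realType.
Variables (m n : nat) (ell : 'I_m -> nat).
Variable D : forall i : 'I_m, 'M[R]_(ell i, n).
Variable V : forall i : 'I_m, 'cV[R]_(ell i).
Hypothesis Hspec : forall i : 'I_m, spec_norm_le ((D i)^T *m D i) 1.
Variable g : R.
Hypothesis g0 : 0 < g.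

Lemma step_facts (A A' : 'M[R]_(n, m)) : iht_step D V g A A' ->
  let T := Hthr (Num.sqrt g) (Bmat D V A) in
  [/\ resid D V A' <= resid D V T, (norm20 A' <= norm20 T)%N,
      Fobj D V g T <= Fobj D V g A,
      (forall Y, supp Y \subset supp T -> resid D V A' <= resid D V Y) &
      tcost g (Bmat D V A) T <= tcost g (Bmat D V A) A].
Proof.
move=> [Hs Hm] T.
have Ht := proj1 (thr_opt (Bmat D V A) A g0).
have Hsur := @surrogate R m n ell D V Hspec A T.
split => //.
- by apply: Hm; rewrite subxx.
- exact: subset_leq_card.
- by rewrite /Fobj; move: Ht; rewrite /tcost; lra.
Qed.

Lemma descent (A A' : 'M[R]_(n, m)) : iht_step D V g A A' ->
  Fobj D V g A' <= Fobj D V g A.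
Proof.
move=> H; have [h1 h2 h3 _ _] := step_facts H.
apply: le_trans h3; rewrite /Fobj lerD //.
by rewrite ler_pM2l // ler_nat.
Qed.

End Step.
Section Topo.
Variable R : realType.

Lemma entry_cvg p q (L : 'M[R]_(p, q)) a b :
  {for L, continuous (fun C : 'M[R]_(p, q) => C a b)}.
Proof.
apply: (proj2 (@cvg_ballP _ _ _ _ (nbhs_filter L) _ _)) => e e0; apply/nbhs_ballP; exists e => // C /= [_ H].
exact: H.
Qed.

Lemma cvg_sum' (T : Type) (F : set_system T) (FF : Filter F) (I : finType)
  (f : I -> T -> R) (l : I -> R) :
  (forall i, f i @ F --> l i) -> (fun x => \sum_i f i x) @ F --> \sum_i l i.
Proof.
move=> H; rewrite /index_enum; rewrite unlock /=.
elim: (Finite.enum I) => [|a s IH] /=.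
  exact: cvg_cst.
by apply: cvgD => //; apply: H.
Qed.

End Topo.
Section Cont.
Variable R : realType.
Variables (m n : nat) (ell : 'I_m -> nat).
Variable D : forall i : 'I_m, 'M[R]_(ell i, n).
Variable V : forall i : 'I_m, 'cV[R]_(ell i).

Lemma residE (C : 'M[R]_(n, m)) : resid D V C =
  \sum_i \sum_(r < ell i) (\sum_k D i r k * C k i - V i r ord0) ^+ 2.
Proof.
rewrite /resid; apply: eq_bigr => i _; rewrite /sqnorm; apply: eq_bigr => r _.
rewrite big_ord1 !mxE; congr (_ ^+ 2); congr (_ - _).
by apply: eq_bigr => k _; rewrite mxE.
Qed.

Lemma resid_cont (L : 'M[R]_(n, m)) : {for L, continuous (resid D V)}.
Proof.
have -> : resid D V = fun C => \sum_i \sum_(r < ell i) (\sum_k D i r k * C k i - V i r ord0) ^+ 2.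
  by apply/funext => C; rewrite residE.
apply: (@cvg_sum' _ _ _ (nbhs_filter L)) => i.
apply: (@cvg_sum' _ _ _ (nbhs_filter L)) => r.
have H : (fun C : 'M[R]_(n, m) => \sum_k D i r k * C k i - V i r ord0) @ L -->
          (\sum_k D i r k * L k i - V i r ord0).
  have H1 : (fun C : 'M[R]_(n, m) => \sum_k D i r k * C k i) @ L --> \sum_k D i r k * L k i.
    apply: (@cvg_sum' _ _ _ (nbhs_filter L) _ (fun k C => D i r k * C k i)) => k.
    exact: (cvgM (cvg_cst _) (@entry_cvg _ _ _ L k i)).
  exact: (cvgB H1 (cvg_cst _)).
rewrite expr2.
have -> : (fun C : 'M[R]_(n, m) => (\sum_k D i r k * C k i - V i r ord0) ^+ 2) =
   (fun C => \sum_k D i r k * C k i - V i r ord0) \* (fun C => \sum_k D i r k * C k i - V i r ord0).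
  by apply/funext => C; rewrite /= expr2.
exact: (cvgM H H).
Qed.

End Cont.
Section LocMin.
Variable R : realType.
Variables (m n : nat) (ell : 'I_m -> nat).
Variable D : forall i : 'I_m, 'M[R]_(ell i, n).
Variable V : forall i : 'I_m, 'cV[R]_(ell i).
Variable g : R.
Hypothesis g0 : 0 < g.

Lemma row_neq0 p q (X : 'M[R]_(p, q)) j : row j X != 0 -> exists i, X j i != 0.
Proof.
move=> H; apply: contrapT => H'; move/eqP: H; apply; apply/rowP => i; rewrite !mxE.
by apply/eqP; apply: contrapT => Hn; apply: H'; exists i; apply/negP.
Qed.

Lemma minimizer_local_min (L : 'M[R]_(n, m)) :
  (forall Y, supp Y \subset supp L -> resid D V L <= resid D V Y) ->
  local_min D V g L.
Proof.
move=> Hmin.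
have FL := nbhs_filter L.
have H1 : \forall C \near L, `|resid D V L - resid D V C| < g := @cvgr_dist_lt _ _ _ (nbhs L) FL (resid D V) (resid D V L) (@resid_cont _ _ _ _ D V L) g g0.
have H2 : \forall C \near L, forall j, j \in supp L -> row j C != 0.
  apply: (@filter_forall _ _ (fun j (C : 'M[R]_(n, m)) => j \in supp L -> row j C != 0) _ FL) => j.
  case: (boolP (j \in supp L)) => hj; last first.
    by apply: (nearW FL).
  have [i Hi] : exists i, L j i != 0.
    by apply: row_neq0; move: hj; rewrite inE.
  have Lp : 0 < `|L j i| by rewrite normr_gt0.
  have HC0 : \forall C \near L, `|L j i - (C : 'M[R]_(n, m)) j i| < `|L j i| :=
    @cvgr_dist_lt _ _ _ (nbhs L) FL (fun C : 'M[R]_(n, m) => C j i) (L j i)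
     (@entry_cvg _ _ _ L j i) `|L j i| Lp.
  near=> C => _.
  have HC : `|L j i - C j i| < `|L j i| by near: C; exact: HC0.
  apply/eqP => Hrow.
  have := congr1 (fun M : 'rV[R]_m => M 0 i) Hrow; rewrite !mxE => HCj.
  by move: HC; rewrite HCj subr0 ltxx.
rewrite /local_min.
near=> C.
have hC1 : `|resid D V L - resid D V C| < g by near: C; exact: H1.
have hC2 : forall j, j \in supp L -> row j C != 0 by near: C; exact: H2.
have sub : supp L \subset supp C.
  by apply/fintype.subsetP => j hj; rewrite inE; apply: hC2.
rewrite /Fobj.
case: (eqVneq (supp C) (supp L)) => E.
  have h : resid D V L <= resid D V C by apply: Hmin; rewrite E subxx.
  by rewrite /norm20 E lerD2r.
have pr : supp L \proper supp C.
  by rewrite finset.properEneq sub andbT eq_sym E.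
have cl := proper_card pr.
have : ((norm20 L).+1 <= norm20 C)%N by [].
rewrite -(ler_nat R) -addn1 natrD => hn.
have h3 : resid D V L - resid D V C < g := ltr_normlW hC1.
have := ler_wpM2l (ltW g0) hn; rewrite mulrDr mulr1 => h4.
lra.
Unshelve. all: by end_near.
Qed.
End LocMin.
Section Seq.
Variable R : realType.

Lemma pigeon (T : finType) (s : nat -> T) :
  exists t, forall N, exists2 j, (N <= j)%N & s j = t.
Proof.
apply: contrapT => H.
have H1 : forall t, exists N, forall j, (N <= j)%N -> s j <> t.
  move=> t; apply: contrapT => H2; apply: H; exists t => N.
  apply: contrapT => H3; apply: H2; exists N => j Nj E; apply: H3; by exists j.
pose N := (\max_t (projT1 (cid (H1 t))))%N.
have := projT2 (cid (H1 (s N))) N.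
by apply => //; rewrite /N; exact: leq_bigmax.
Qed.

Lemma freq_le (u : nat -> R) l c : u @ \oo --> l ->
  (forall N, exists2 j, (N <= j)%N & u j <= c) -> l <= c.
Proof.
move=> Hu Hf; rewrite leNgt; apply/negP => hlc.
have := @cvgr_dist_lt _ _ _ _ (eventually_filter) u l Hu (l - c); rewrite subr_gt0 => /(_ hlc).
move=> [N _ HN].
have [j Nj hj] := Hf N.
have := HN j Nj; rewrite /= => h.
have := ltr_normlW h; lra.
Qed.

Lemma freq_eq0 (u : nat -> R) l : u @ \oo --> l ->
  (forall N, exists2 j, (N <= j)%N & u j = 0) -> l = 0.
Proof.
move=> Hu Hf; apply/eqP; rewrite eq_le; apply/andP; split.
  by apply: (freq_le Hu) => N; have [j Nj hj] := Hf N; exists j => //; rewrite hj.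
rewrite -oppr_le0; apply: (freq_le (cvgN Hu)) => N.
by have [j Nj hj] := Hf N; exists j => //; rewrite /GRing.opp /= hj oppr0.
Qed.

Lemma homo_ge (phi : nat -> nat) : {homo phi : a b / (a < b)%N} -> forall j, (j <= phi j)%N.
Proof.
move=> H; elim=> [//|j IH]; apply: leq_ltn_trans IH _; exact: H.
Qed.

End Seq.
Section Part2.
Variable R : realType.
Variables (m n : nat) (ell : 'I_m -> nat).
Variable D : forall i : 'I_m, 'M[R]_(ell i, n).
Variable V : forall i : 'I_m, 'cV[R]_(ell i).
Variable g : R.

Lemma part2 (C : nat -> 'M[R]_(n, m)) (phi : nat -> nat) (L : 'M[R]_(n, m)) :
  (forall k, iht_step D V g (C k) (C k.+1)) ->
  {homo phi : a b / (a < b)%N} ->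
  (C \o phi) @ \oo --> L ->
  forall Y, supp Y \subset supp L -> resid D V L <= resid D V Y.
Proof.
move=> Hst Hphi Hcv.
pose Sset k := supp (Hthr (Num.sqrt g) (Bmat D V (C k))).
pose psi j := (phi j.+1).-1.
have Epsi j : phi j.+1 = (psi j).+1.
  by rewrite /psi prednK //; apply: leq_trans (homo_ge Hphi j.+1).
have [S HS] := pigeon (fun j => Sset (psi j)).
have Hfreq N : exists2 j, (N <= j)%N &
    (supp (C (phi j)) \subset S /\
     (forall Y, supp Y \subset S -> resid D V (C (phi j)) <= resid D V Y)).
  have [j Nj Ej] := HS N.
  exists j.+1; first exact: leqW.
  rewrite Epsi; have [h1 h2] := Hst (psi j).
  by rewrite -Ej; split.
have suppL : supp L \subset S.
  apply/fintype.subsetP => a; apply: contraTT => aS.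
  rewrite inE negbK; apply/eqP/rowP => b; rewrite !mxE.
  apply: (@freq_eq0 _ (fun j => C (phi j) a b)).
    exact: (continuous_cvg _ (@entry_cvg _ _ _ L a b) Hcv).
  move=> N; have [j Nj [h1 _]] := Hfreq N; exists j => //.
  have : a \notin supp (C (phi j)).
    by apply: contra aS; apply: (fintype.subsetP h1).
  rewrite inE negbK => /eqP Hr.
  by have := congr1 (fun M : 'rV[R]_m => M 0 b) Hr; rewrite !mxE.
move=> Y HY.
apply: (@freq_le _ (fun j => resid D V (C (phi j)))).
  exact: (continuous_cvg _ (@resid_cont _ _ _ _ D V L) Hcv).
move=> N; have [j Nj [_ h2]] := Hfreq N; exists j => //.
by apply: h2; apply: fintype.subset_trans HY suppL.
Qed.

End Part2.
Section Uniq.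
Variable R : realType.
Variables (m n : nat) (ell : 'I_m -> nat).
Variable D : forall i : 'I_m, 'M[R]_(ell i, n).
Variable V : forall i : 'I_m, 'cV[R]_(ell i).

Lemma sq_mid p q (P Q : 'M[R]_(p, q)) :
  4 * sqnorm (2^-1 *: (P + Q)) + sqnorm (P - Q) = 2 * sqnorm P + 2 * sqnorm Q.
Proof.
rewrite /sqnorm !mulr_sumr -!big_split; apply: eq_bigr => i _.
rewrite !mulr_sumr -!big_split; apply: eq_bigr => j _.
by rewrite !mxE /=; field.
Qed.

Lemma mid_shift p q (a b v : 'M[R]_(p, q)) :
  2^-1 *: (a + b) - v = 2^-1 *: ((a - v) + (b - v)).
Proof. by apply/matrixP => i j; rewrite !mxE; field. Qed.

Lemma supp_subP (X : 'M[R]_(n, m)) (S : {set 'I_n}) :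
  reflect (forall j, j \notin S -> row j X = 0) (supp X \subset S).
Proof.
apply: (iffP idP).
  move=> H j jS; apply/eqP; apply: contraTT jS => hj; rewrite negbK.
  by apply: (fintype.subsetP H); rewrite inE.
move=> H; apply/fintype.subsetP => j; rewrite inE; apply: contraR => jS.
by rewrite H.
Qed.

Lemma uniq_min (S : {set 'I_n}) (X Y : 'M[R]_(n, m)) :
  coercive D ->
  supp X \subset S -> supp Y \subset S ->
  (forall Z, supp Z \subset S -> resid D V X <= resid D V Z) ->
  (forall Z, supp Z \subset S -> resid D V Y <= resid D V Z) -> X = Y.
Proof.
move=> [dl dl0 Hco] hX hY mX mY.
pose Z := 2^-1 *: (X + Y).
have hZ : supp Z \subset S.
  apply/supp_subP => j jS.
  have : row j Z = 2^-1 *: (row j X + row j Y) by apply/rowP => k; rewrite !mxE.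
  by rewrite (supp_subP _ _ hX j jS) (supp_subP _ _ hY j jS) addr0 scaler0.
have key : 4 * resid D V Z + \sum_i sqnorm (Dstar D (X - Y) i) =
           2 * resid D V X + 2 * resid D V Y.
  rewrite /resid !mulr_sumr -!big_split; apply: eq_bigr => i _ /=.
  have -> : Dstar D Z i - V i = 2^-1 *: ((Dstar D X i - V i) + (Dstar D Y i - V i)).
    by rewrite -mid_shift /Dstar /Z colZ' colD' -scalemxAr mulmxDr.
  have -> : Dstar D (X - Y) i = (Dstar D X i - V i) - (Dstar D Y i - V i).
    by rewrite /Dstar colB' mulmxBr opprB addrA subrK.
  exact: sq_mid.
have s0 : \sum_i sqnorm (Dstar D (X - Y) i) = 0.
  apply/eqP; rewrite eq_le; apply/andP; split; last first.
    by apply: sumr_ge0 => i _; apply: sqnorm_ge0.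
  have := mX Z hZ; have := mY Z hZ; have := mX Y hY; have := mY X hX; lra.
have := Hco (X - Y); rewrite /Dstar_norm s0 sqrtr0 => h.
have : norm2 (X - Y) <= 0.
  by rewrite -(pmulr_rle0 _ dl0).
rewrite /norm2 => h2.
have : Num.sqrt (sqnorm (X - Y)) = 0.
  by apply/eqP; rewrite eq_le h2 sqrtr_ge0.
move/eqP; rewrite sqrtr_eq0 => h3.
have : sqnorm (X - Y) = 0 by apply/eqP; rewrite eq_le h3 sqnorm_ge0.
by move/sqnorm_eq0/eqP; rewrite subr_eq0 => /eqP.
Qed.

End Uniq.
Section EqStep.
Variable R : realType.
Variables (m n : nat) (ell : 'I_m -> nat).
Variable D : forall i : 'I_m, 'M[R]_(ell i, n).
Variable V : forall i : 'I_m, 'cV[R]_(ell i).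
Hypothesis Hspec : forall i : 'I_m, spec_norm_le ((D i)^T *m D i) 1.
Variable g : R.
Hypothesis g0 : 0 < g.
Hypothesis Hco : coercive D.

Lemma eq_step (A A' : 'M[R]_(n, m)) : iht_step D V g A A' ->
  Fobj D V g A' = Fobj D V g A ->
  (norm20 A' <= norm20 A)%N /\ (A' <> A -> (norm20 A' < norm20 A)%N).
Proof.
move=> Hst HF.
have [h1 h2 h3 h4 h5] := step_facts Hspec g0 Hst.
move: Hst => [Hs _].
set B := Bmat D V A in h3 h4 h5.
set T := Hthr (Num.sqrt g) B in h1 h2 h3 h4 h5 Hs.
have Hsur := @surrogate R m n ell D V Hspec A T.
rewrite -/B in Hsur.
have h2' : g * (norm20 A')%:R <= g * (norm20 T)%:R by rewrite ler_pM2l // ler_nat.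
have eR : resid D V A' = resid D V T.
  move: HF h3; rewrite /Fobj => HF h3; lra.
have eT : A' = T.
  apply: (@uniq_min R m n ell D V (supp T)) => //.
  by move=> Z hZ; rewrite -eR; apply: h4.
have eC : tcost g B T = tcost g B A.
  move: HF h3 h5 Hsur; rewrite /Fobj /tcost => HF h3 h5 Hsur; lra.
have Hrow := proj2 (thr_opt B A g0) eC.
rewrite -/T in Hrow.
have sTA : supp T \subset supp A.
  apply/fintype.subsetP => j; rewrite !inE => hj.
  case: (eqVneq (row j A) (row j T)) => [->//|ne].
  exact: (proj2 (Hrow j ne)).
rewrite eT; split; first exact: subset_leq_card.
move=> neq; apply: proper_card.
rewrite properE sTA /=.
have [j hj] : exists j, row j A != row j T.
  apply: contrapT => H; apply: neq; apply/row_matrixP => j.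
  by apply/eqP; apply: contrapT => H'; apply: H; exists j; rewrite eq_sym; apply/negP.
have [hT hA] := Hrow j hj.
apply/subsetPn; exists j; first by rewrite inE.
by rewrite inE hT eqxx.
Qed.

End EqStep.
Lemma ev_const (T : Type) (u : nat -> T) (mu : nat -> nat) K0 :
  (forall k, (K0 <= k)%N -> (mu k.+1 <= mu k)%N /\ (u k.+1 <> u k -> (mu k.+1 < mu k)%N)) ->
  exists K, (K0 <= K)%N /\ forall k, (K <= k)%N -> u k = u K.
Proof.
move=> H.
have mono K : (K0 <= K)%N -> forall d, (mu (K + d) <= mu K)%N.
  move=> hK; elim=> [|d IH]; first by rewrite addn0.
  rewrite addnS; apply: leq_trans IH; apply: (proj1 (H _ _)).
  exact: leq_trans hK (leq_addr _ _).
suff: forall M K, (K0 <= K)%N -> (mu K <= M)%N ->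
        exists K', (K <= K')%N /\ forall k, (K' <= k)%N -> u k = u K'.
  move=> /(_ (mu K0) K0 (leqnn _) (leqnn _)) [K' [h1 h2]].
  by exists K'.
elim=> [|M IH] K hK hM.
all: case: (pselect (forall d, u (K + d).+1 = u (K + d))) => [Hc|Hn].
1,3: exists K; split => // k hk; rewrite -(subnKC hk).
1,2: elim: (k - K)%N => [|d IHd]; first by rewrite addn0.
1,2: by rewrite addnS Hc.
all: have [d Hd] : exists d, u (K + d).+1 <> u (K + d)
       by apply: contrapT => Hx; apply: Hn => d; apply: contrapT => Hy; apply: Hx; exists d.
all: have hKd : (K0 <= K + d)%N by apply: leq_trans hK (leq_addr _ _).
all: have lt := proj2 (H _ hKd) Hd.
all: have := mono K hK d.
- by move=> h; move: hM lt h; lia.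
- move=> h.
  have [K' [h1 h2]] := IH (K + d).+1 (leqW hKd) ltac:(lia).
  exists K'; split => //; apply: leq_trans h1; lia.
Qed.

Unset Implicit Arguments.

Theorem theorem1 (R : realType) (m n : nat) (ell : 'I_m -> nat)
    (D : forall i : 'I_m, 'M[R]_(ell i, n))
    (V : forall i : 'I_m, 'cV[R]_(ell i))
    (gamma : R) (C : nat -> 'M[R]_(n, m)) :
  (0 < m)%N -> (0 < n)%N ->
  (forall i : 'I_m, spec_norm_le ((D i)^T *m D i) 1) ->
  0 < gamma ->
  (forall k : nat, iht_step D V gamma (C k) (C k.+1)) ->
  [/\ (forall k : nat, Fobj D V gamma (C k.+1) <= Fobj D V gamma (C k)),
      (forall (phi : nat -> nat) (L : 'M[R]_(n, m)),
          {homo phi : a b / (a < b)%N} ->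
          (C \o phi) @ \oo --> L -> local_min D V gamma L)
    & (coercive D ->
         exists2 L : 'M[R]_(n, m), C @ \oo --> L & local_min D V gamma L)].
Proof.
move=> _ _ Hspec g0 Hst.
have P1 : forall k, Fobj D V gamma (C k.+1) <= Fobj D V gamma (C k).
  by move=> k; exact: (@descent R m n ell D V Hspec gamma g0 _ _ (Hst k)).
have P2 : forall (phi : nat -> nat) (L : 'M[R]_(n, m)),
          {homo phi : a b / (a < b)%N} ->
          (C \o phi) @ \oo --> L -> local_min D V gamma L.
  move=> phi L Hphi Hcv; apply: (@minimizer_local_min R m n ell D V gamma g0 L).
  exact: (@part2 R m n ell D V gamma C phi L Hst Hphi Hcv).
split => // Hco.
pose Sset k := supp (Hthr (Num.sqrt gamma) (C k + DTstar D (fun i => V i - Dstar D (C k) i))).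
have Huniq : forall k j, Sset k = Sset j -> C k.+1 = C j.+1.
  move=> k j E.
  have [hk mk] := Hst k; have [hj mj] := Hst j.
  rewrite -/(Sset k) in hk mk; rewrite -/(Sset j) in hj mj.
  apply: (@uniq_min R m n ell D V (Sset k) (C k.+1) (C j.+1) Hco hk _ mk _).
  - by rewrite E.
  - by move=> Z hZ; apply: mj; rewrite -E.
pose f k := Fobj D V gamma (C k.+1).
pose mu k := #|[set S : {set 'I_n} | `[< exists j, Sset j = S /\ f j < f k >]]|.
have [K1 [_ HK1]] : exists K, (0 <= K)%N /\ forall k, (K <= k)%N -> f k = f K.
  apply: (@ev_const _ f mu 0) => k _.
  have fle : f k.+1 <= f k by apply: P1.
  have sub : [set S : {set 'I_n} | `[< exists j, Sset j = S /\ f j < f k.+1 >]] \subset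
             [set S : {set 'I_n} | `[< exists j, Sset j = S /\ f j < f k >]].
    apply/fintype.subsetP => S; rewrite !inE => /asboolP [j [hj1 hj2]].
    by apply/asboolP; exists j; split => //; apply: lt_le_trans fle.
  split; first exact: subset_leq_card.
  move=> hne; apply: proper_card; rewrite properE sub andTb.
  have flt : f k.+1 < f k by rewrite lt_neqAle fle andbT; apply/eqP.
  apply/subsetPn; exists (Sset k.+1).
    by rewrite inE; apply/asboolP; exists k.+1.
  apply/negP; rewrite ?inE => /asboolP [j [hj1 hj2]].
  have := Huniq _ _ hj1; rewrite /f => E.
  by move: hj2; rewrite /f E ltxx.
have [K [_ HK]] : exists K, (K1.+1 <= K)%N /\ forall k, (K <= k)%N -> C k = C K.
  apply: (@ev_const _ C (fun k => norm20 (C k)) K1.+1) => k hk.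
  apply: (@eq_step R m n ell D V Hspec gamma g0 Hco _ _ (Hst k)).
  have e1 : Fobj D V gamma (C k.+1) = f K1 by apply: HK1; apply: ltnW.
  have e2 : Fobj D V gamma (C k) = f K1.
    have -> : k = k.-1.+1 by rewrite prednK //; apply: leq_ltn_trans hk.
    by apply: HK1; rewrite -ltnS prednK //; apply: leq_ltn_trans hk.
  by rewrite e1 e2.
have Hcv : C @ \oo --> C K.
  apply: cvg_near_cst; near=> k; apply: HK; near: k; exact: nbhs_infty_ge.
exists (C K) => //.
by apply: (P2 id) => //.
Unshelve. all: by end_near.
Qed.
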